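(* Let $n,m\ge1$ and $C\in\mathbb{R}^{2m\times 2n}$. Suppose there exists a nonzero real $2n\times 2\ell$ matrix $T_1$ ($\ell\ge 1$) with $\mathrm{Range}(T_1)=\mathrm{Ker}(C)\cap\mathrm{Ker}(C\Sigma_n)$ and $\Sigma_nT_1=T_1\Sigma_\ell$. Let $G\in\mathbb{R}^{2n\times 2n}$ be symmetric and suppose $\mathrm{Range}(T_1)$ is invariant under $G$ (i.e. $G\,\mathrm{Range}(T_1)\subseteq\mathrm{Range}(T_1)$). Then the linear quantum system determined by $(G,C)$ has a DF subsystem with DF mode $T_1^\top\hat x$; that is, with $A=\Sigma_n(G+C^\top\Sigma_mC/2)$ and $\mathcal{O}=(C^\top,A^\top C^\top,\ldots,(A^\top)^{2n-1}C^\top)^\top$, one has $\mathcal{O}T_1=O$ and $\mathcal{O}\Sigma_nT_1=O$.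
   Context: For $k\ge1$, $\Sigma_k=\mathrm{diag}\{\Sigma,\ldots,\Sigma\}$ ($2k\times2k$) with $\Sigma=\begin{pmatrix}0&1\\-1&0\end{pmatrix}$. The linear quantum system determined by $(G,C)$ is $d\hat x=A\hat x\,dt+\Sigma_nC^\top\Sigma_m\,d\hat{\mathcal W}$, $d\hat{\mathcal W}^{\rm out}=C\hat x\,dt+d\hat{\mathcal W}$ with $A=\Sigma_n(G+C^\top\Sigma_mC/2)$, where $\hat x$ is a vector of $n$ canonical pairs with $\hat x\hat x^\top-(\hat x\hat x^\top)^\top=i\Sigma_n$. A DF mode is a variable $T^\top\hat x$ with $T^\top\Sigma_nT=\Sigma_\ell$ whose columns span a subspace lying in $\mathrm{Ker}(\mathcal{O})\cap\mathrm{Ker}(\mathcal{O}\Sigma_n)$ (equivalently uncontrollable w.r.t. the input $\hat{\mathcal W}$ and unobservable w.r.t. the output $\hat{\mathcal W}^{\rm out}$). *)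

(* Defs.v *)
From HB Require Import structures.
From mathcomp Require Import all_boot all_order all_algebra.
Set Implicit Arguments. Unset Strict Implicit. Unset Printing Implicit Defensive.
Import Order.TTheory GRing.Theory Num.Theory.
Local Open Scope ring_scope.

(* Sigma_k = diag(Sigma, ..., Sigma), 2k x 2k, Sigma = [[0,1],[-1,0]] *)
Definition Sigma (R : nzRingType) (k : nat) : 'M[R]_(2 * k) :=
  \matrix_(i < 2 * k, j < 2 * k)
    (if odd j && (i.+1 == j :> nat) then 1
     else if odd i && (j.+1 == i :> nat) then -1 else 0).

(* Column space (Range) of a matrix M, as a row space: rows of M^T. *)
Definition colspace (R : fieldType) (p q : nat) (M : 'M[R]_(p, q)) := (M^T)%MS.

(* Kernel {x | M x = 0} (column vectors), as a row space: kermx (M^T). *)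
Definition kerspace (R : fieldType) (p q : nat) (M : 'M[R]_(p, q)) := kermx (M^T).

Definition sysA (R : fieldType) (n m : nat) (G : 'M[R]_(2 * n))
  (C : 'M[R]_(2 * m, 2 * n)) : 'M[R]_(2 * n) :=
  Sigma R n *m (G + (2%:R)^-1 *: (C^T *m Sigma R m *m C)).

Definition obsv (R : fieldType) (n m : nat) (G : 'M[R]_(2 * n))
  (C : 'M[R]_(2 * m, 2 * n)) :=
  \mxcol_(k < 2 * n) (C *m (sysA G C) ^+ k).

(* Main.v *)
Require Import Defs.
From HB Require Import structures.
From mathcomp Require Import all_boot all_order all_algebra.
Import Order.TTheory GRing.Theory Num.Theory.
Local Open Scope ring_scope.

Theorem proposition1 (R : realFieldType) (n m l : nat)
  (C : 'M[R]_(2 * m, 2 * n)) (T1 : 'M[R]_(2 * n, 2 * l))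
  (G : 'M[R]_(2 * n)) :
  (1 <= n)%N -> (1 <= m)%N -> (1 <= l)%N ->
  T1 != 0 ->
  (colspace T1 == kerspace C :&: kerspace (C *m Sigma R n))%MS ->
  Sigma R n *m T1 = T1 *m Sigma R l ->
  G^T = G ->
  (colspace (G *m T1) <= colspace T1)%MS ->
  obsv G C *m T1 = 0 /\ obsv G C *m (Sigma R n *m T1) = 0.
Proof.
move=> _ _ _ _ /eqmxP Heq HS _ HG.
have Hsub : (T1^T <= kerspace C :&: kerspace (C *m Sigma R n))%MS.
  by rewrite /colspace in Heq; rewrite Heq.
have H1 : C *m T1 = 0.
  have /sub_kermxP H : (T1^T <= kermx C^T)%MS.
    exact: submx_trans Hsub (capmxSl _ _).
  by rewrite -[C *m T1]trmxK trmx_mul H trmx0.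
have H2 : C *m (Sigma R n *m T1) = 0.
  have /sub_kermxP H : (T1^T <= kermx (C *m Sigma R n)^T)%MS.
    exact: submx_trans Hsub (capmxSr _ _).
  by rewrite mulmxA -[C *m Sigma R n *m T1]trmxK trmx_mul H trmx0.
move: HG; rewrite /colspace => /submxP [K HK].
have HGT : G *m T1 = T1 *m K^T.
  by rewrite -[G *m T1]trmxK HK trmx_mul trmxK.
have HA : sysA G C *m T1 = T1 *m (Sigma R l *m K^T).
  rewrite /sysA -(mulmxA (Sigma R n)) mulmxDl -scalemxAl -(mulmxA _ C) H1 !mulmx0 scaler0 addr0.
  idtac.
  by rewrite HGT mulmxA HS mulmxA.
have HAk : forall k, sysA G C ^+ k *m T1 = T1 *m (Sigma R l *m K^T) ^+ k.
  elim=> [|k IH]; first by rewrite !expr0 mul1mx mulmx1.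
  by rewrite !exprS -!mulmxE -mulmxA IH mulmxA HA -(mulmxA T1).
have Hk : forall k, C *m sysA G C ^+ k *m T1 = 0.
  by move=> k; rewrite -mulmxA HAk mulmxA H1 mul0mx.
split; rewrite /obsv mxcol_mul; rewrite -[RHS]mxcol0; apply: eq_mxcol => k.
  exact: Hk.
by rewrite HS mulmxA Hk mul0mx.
Qed.
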